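(* Let $d\ge1$, $k\in\{1,\dots,d\}$, and let $P\subset\{x\in\mathbb{R}^d:x_k>0\}$ be an $n$-dimensional polytope with $0\le n\le d-1$. Suppose there exists a hyperplane $\{x:\pi^\top x=\pi_0\}$ containing $P$ that is not orthogonal to $\bar H=\{x\in\mathbb{R}^d:x_k=0\}$ (i.e. $\pi_k\neq0$). Then: (i) $\mathrm{swp}_k(P)$ is an $(n+1)$-dimensional polytope; (ii) every $l$-face of $\mathrm{swp}_k(P)$ is either an $l$-face of $P$, or an $l$-face of $\mathrm{proj}_k(P)$, or equals $\mathrm{swp}_k(\Gamma^{l-1})$ for some $(l-1)$-face $\Gamma^{l-1}$ of $P$; and (iii) every face of $P$ and every face of $\mathrm{proj}_k(P)$ is a face of $\mathrm{swp}_k(P)$, and $\mathrm{swp}_k(\Gamma)$ is a face of $\mathrm{swp}_k(P)$ for every face $\Gamma$ of $P$.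
   Context: $e_k$ is the $k$-th standard unit vector. For $P\subset\mathbb{R}^d$: $\mathrm{proj}_k(P)=\{p-p_ke_k:p\in P\}$ and $\mathrm{swp}_k(P)=\{p-\theta p_ke_k:p\in P,\theta\in[0,1]\}$. A polytope is the convex hull of finitely many points; its faces are the intersections with supporting hyperplanes (together with the polytope itself), the dimension of a face is that of its affine hull, and an $l$-face is a face of dimension $l$. *)

(* Defs.v *)
From HB Require Import structures.
From mathcomp Require Import all_boot all_order all_algebra.
From mathcomp Require Import reals.
Set Implicit Arguments. Unset Strict Implicit. Unset Printing Implicit Defensive.
Import Order.TTheory GRing.Theory Num.Theory.
Local Open Scope ring_scope.

Section Defs.
Variables (R : realType) (d : nat).
Notation vec := 'rV[R]_d.

Definition rset := vec -> Prop.

Definition dotv (a x : vec) : R := \sum_(i < d) a 0 i * x 0 i.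

Definition unitv (k : 'I_d) : vec := delta_mx 0 k.

Definition conv_hull (S : seq vec) : rset := fun x =>
  exists lam : 'I_(size S) -> R,
    (forall i, 0 <= lam i) /\ \sum_i lam i = 1 /\
    x = \sum_i lam i *: S`_i.

Definition is_polytope (P : rset) : Prop :=
  exists S : seq vec, P = conv_hull S.

Definition aff_hull (A : rset) : rset := fun x =>
  exists S : seq vec, (forall i, (i < size S)%N -> A S`_i) /\
    exists lam : 'I_(size S) -> R, \sum_i lam i = 1 /\
      x = \sum_i lam i *: S`_i.

(* A has dimension n: its affine hull is a translate x0 + V of a linear
   subspace V (row space of a matrix) with dim V = n.  The empty set has
   no (natural-number) dimension. *)
Definition affdim (A : rset) (n : nat) : Prop :=
  exists (x0 : vec) (V : 'M[R]_d), \rank V = n /\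
    forall x, aff_hull A x <-> (x - x0 <= V)%MS.

Definition is_face (P F : rset) : Prop :=
  F = P \/
  exists (a : vec) (b : R), a != 0 /\
    (forall x, P x -> dotv a x <= b) /\
    (exists x, P x /\ dotv a x = b) /\
    F = (fun x => P x /\ dotv a x = b).

Definition is_lface (P : rset) (l : nat) (F : rset) : Prop :=
  is_face P F /\ affdim F l.

Definition projk (k : 'I_d) (P : rset) : rset := fun y =>
  exists p, P p /\ y = p - p 0 k *: unitv k.

Definition swpk (k : 'I_d) (P : rset) : rset := fun y =>
  exists p theta, P p /\ 0 <= theta <= 1 /\ y = p - (theta * p 0 k) *: unitv k.

End Defs.

(* Main.v *)
Require Import Defs.
From HB Require Import structures.
From mathcomp Require Import all_boot all_order all_algebra.
From mathcomp Require Import reals.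
From Stdlib Require Import ClassicalEpsilon FunctionalExtensionality PropExtensionality.
From mathcomp Require Import ring lra zify.
Import Order.TTheory GRing.Theory Num.Theory.
Local Open Scope ring_scope.
Set Implicit Arguments. Unset Strict Implicit. Unset Printing Implicit Defensive.

Lemma dotvDr (R : realType) d (a x y : 'rV[R]_d) : dotv a (x + y) = dotv a x + dotv a y.
Proof. by rewrite /dotv -big_split; apply: eq_bigr => i _; rewrite mxE mulrDr. Qed.
Lemma dotvZr (R : realType) d (a x : 'rV[R]_d) c : dotv a (c *: x) = c * dotv a x.
Proof. by rewrite /dotv mulr_sumr; apply: eq_bigr => i _; rewrite mxE mulrCA. Qed.
Lemma dotv0r (R : realType) d (a : 'rV[R]_d) : dotv a 0 = 0.
Proof. by rewrite -(scale0r 0) dotvZr mul0r. Qed.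
Lemma dotvNr (R : realType) d (a x : 'rV[R]_d) : dotv a (- x) = - dotv a x.
Proof. by rewrite -scaleN1r dotvZr mulN1r. Qed.
Lemma dotvBr (R : realType) d (a x y : 'rV[R]_d) : dotv a (x - y) = dotv a x - dotv a y.
Proof. by rewrite dotvDr dotvNr. Qed.
Lemma dotvDl (R : realType) d (a b x : 'rV[R]_d) : dotv (a + b) x = dotv a x + dotv b x.
Proof. by rewrite /dotv -big_split; apply: eq_bigr => i _; rewrite mxE mulrDl. Qed.
Lemma dotvZl (R : realType) d (a x : 'rV[R]_d) c : dotv (c *: a) x = c * dotv a x.
Proof. by rewrite /dotv mulr_sumr; apply: eq_bigr => i _; rewrite mxE mulrA. Qed.
Lemma dotvNl (R : realType) d (a x : 'rV[R]_d) : dotv (- a) x = - dotv a x.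
Proof. by rewrite -scaleN1r dotvZl mulN1r. Qed.
Lemma dotvBl (R : realType) d (a b x : 'rV[R]_d) : dotv (a - b) x = dotv a x - dotv b x.
Proof. by rewrite dotvDl dotvNl. Qed.
Lemma dotv_sumr (R : realType) d (a : 'rV[R]_d) (I : Type) (r : seq I) (P : pred I) F :
  dotv a (\sum_(i <- r | P i) F i) = \sum_(i <- r | P i) dotv a (F i).
Proof. exact: (big_morph (dotv a) (dotvDr a) (dotv0r a)). Qed.
Lemma unitvE (R : realType) d (k i : 'I_d) : (unitv R k) 0 i = (i == k)%:R.
Proof. by rewrite /unitv mxE eqxx. Qed.
Lemma dotv_unit (R : realType) d (a : 'rV[R]_d) (k : 'I_d) : dotv a (unitv R k) = a 0 k.
Proof.
rewrite /dotv (bigD1 k) //= unitvE eqxx mulr1 big1 ?addr0 // => i /negbTE Hi.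
by rewrite unitvE Hi mulr0.
Qed.
Lemma unitv_neq0 (R : realType) d (k : 'I_d) : unitv R k != 0.
Proof.
apply/negP => /eqP H; have : (unitv R k) 0 k = (0 : 'rV[R]_d) 0 k by rewrite H.
by rewrite unitvE eqxx mxE => /eqP; rewrite oner_eq0.
Qed.
Lemma coordB (R : realType) d (x : 'rV[R]_d) (k : 'I_d) c : (x - c *: unitv R k) 0 k = x 0 k - c.
Proof. by rewrite !mxE !eqxx mulr1. Qed.
Lemma coord_sum (R : realType) d (k : 'I_d) (I : Type) (r : seq I) (P : pred I) (F : I -> 'rV[R]_d) :
  (\sum_(i <- r | P i) F i) 0 k = \sum_(i <- r | P i) F i 0 k.
Proof. by rewrite summxE. Qed.

Definition ordext T n (f : 'I_n -> T) (x0 : T) (i : nat) : T :=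
  if insub i is Some j then f j else x0.
Lemma ordextE T n (f : 'I_n -> T) x0 (i : 'I_n) : ordext f x0 i = f i.
Proof. by rewrite /ordext valK. Qed.

Definition affF (R : realType) d (A : rset R d) (x : 'rV[R]_d) :=
  exists n (p : nat -> 'rV[R]_d) (lam : nat -> R),
  (forall i, (i < n)%N -> A (p i)) /\ \sum_(0 <= i < n) lam i = 1 /\
  x = \sum_(0 <= i < n) lam i *: p i.

Lemma affE (R : realType) d (A : rset R d) x : aff_hull A x <-> affF A x.
Proof.
split.
- case=> S [HS [lam [H1 H2]]].
  exists (size S), (fun i => S`_i), (ordext lam 0); split=> //; split.
    by rewrite big_mkord -H1; apply: eq_bigr => i _; rewrite ordextE.
  by rewrite H2 big_mkord; apply: eq_bigr => i _; rewrite ordextE.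
- case=> n [p [lam [HA [H1 H2]]]].
  exists (mkseq p n); rewrite size_mkseq; split.
    by move=> i Hi; rewrite nth_mkseq //; exact: HA.
  exists (fun i => lam i); split; first by rewrite -H1 big_mkord.
  rewrite H2 big_mkord; apply: eq_bigr => i _; by rewrite nth_mkseq.
Qed.

Lemma convE (R : realType) d (S : seq 'rV[R]_d) x : conv_hull S x <->
  exists lam : nat -> R, (forall i, (i < size S)%N -> 0 <= lam i) /\
    \sum_(0 <= i < size S) lam i = 1 /\ x = \sum_(0 <= i < size S) lam i *: S`_i.
Proof.
split.
- case=> lam [H0 [H1 H2]]; exists (ordext lam 0); split.
    by move=> i Hi; have -> : i = Ordinal Hi by []; rewrite ordextE.
  split; first by rewrite big_mkord -H1; apply: eq_bigr => i _; rewrite ordextE.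
  by rewrite H2 big_mkord; apply: eq_bigr => i _; rewrite ordextE.
- case=> lam [H0 [H1 H2]]; exists (fun i => lam i); split; first by move=> i; exact: H0.
  by rewrite -H1 H2 !big_mkord.
Qed.

Definition catf T (n : nat) (f g : nat -> T) (i : nat) : T := if (i < n)%N then f i else g (i - n)%N.
Lemma catf_lt T n (f g : nat -> T) i : (i < n)%N -> catf n f g i = f i.
Proof. by rewrite /catf => ->. Qed.
Lemma catf_add T n (f g : nat -> T) i : catf n f g (i + n) = g i.
Proof. by rewrite /catf ltnNge leq_addl /= addnK. Qed.
Lemma sum_split (V : nmodType) n m (F : nat -> V) :
  \sum_(0 <= i < n + m) F i = \sum_(0 <= i < n) F i + \sum_(0 <= i < m) F (i + n)%N.
Proof.
rewrite (big_cat_nat (leq0n n) (leq_addr m n)) /=; congr (_ + _).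
by rewrite -{1}(add0n n) big_addn addKn.
Qed.

Lemma aff_sub (R : realType) d (A : rset R d) x : A x -> aff_hull A x.
Proof.
move=> Ax; apply/affE; exists 1%N, (fun _ => x), (fun _ => 1); split=> //.
by rewrite !big_nat1 scale1r.
Qed.

Lemma aff_mono (R : realType) d (A B : rset R d) x :
  (forall y, A y -> B y) -> aff_hull A x -> aff_hull B x.
Proof.
move=> AB /affE [n [p [lam [HA H]]]]; apply/affE; exists n, p, lam; split=> //.
by move=> i /HA /AB.
Qed.

Lemma aff_comb2 (R : realType) d (A : rset R d) x y a b :
  aff_hull A x -> aff_hull A y -> a + b = 1 -> aff_hull A (a *: x + b *: y).
Proof.
move=> /affE [n [p [lam [HA [H1 H2]]]]] /affE [m [q [mu [HB [H3 H4]]]]] Hab.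
apply/affE; exists (n + m)%N, (catf n p q), (catf n (fun i => a * lam i) (fun i => b * mu i)).
split; [|split].
- move=> i Hi; rewrite /catf; case: ltnP => Hin; first exact: HA.
  by apply: HB; rewrite ltn_subLR // addnC.
- rewrite sum_split; under [X in _ + X = _]eq_bigr => i _ do rewrite catf_add.
  rewrite (@eq_big_nat _ _ _ _ _ _ (fun i => a * lam i)); last first.
    by move=> i /andP[_ Hi]; rewrite catf_lt.
  by rewrite -!mulr_sumr H1 H3 !mulr1.
- rewrite sum_split; under [X in _ = _ + X]eq_bigr => i _ do rewrite !catf_add.
  rewrite (@eq_big_nat _ _ _ _ _ _ (fun i => a *: (lam i *: p i))); last first.
    by move=> i /andP[_ Hi]; rewrite !catf_lt // scalerA.
  under [X in _ = _ + X]eq_bigr => i _ do rewrite -scalerA.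
  by rewrite -!scaler_sumr H2 H4.
Qed.

Lemma half2 (R : realType) : 2^-1 + 2^-1 = 1 :> R.
Proof. field. exact: isT. Qed.

Lemma aff_comb3 (R : realType) d (A : rset R d) z u w c :
  aff_hull A z -> aff_hull A u -> aff_hull A w -> aff_hull A (z + c *: (u - w)).
Proof.
move=> Hz Hu Hw.
have [Hc|Hc] := eqVneq (1 + c) 0.
- have Hm := aff_comb2 Hz Hw (half2 R).
  have -> : z + c *: (u - w) = 2 *: (2^-1 *: z + 2^-1 *: w) + (-1) *: u.
    have -> : c = -1 by apply/eqP; rewrite -subr_eq0 opprK addrC Hc.
    apply/rowP => j; rewrite !mxE; field. exact: isT.
  by apply: aff_comb2 => //; rewrite -[2]/(1 + 1) addrK.
- have E : (1 + c)^-1 + c / (1 + c) = 1.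
    field. exact: Hc.
  have Hm := aff_comb2 Hz Hu E.
  have -> : z + c *: (u - w) = (1 + c) *: ((1 + c)^-1 *: z + (c / (1 + c)) *: u) + (- c) *: w.
    apply/rowP => j; rewrite !mxE; field. exact: Hc.
  by apply: aff_comb2 => //; rewrite addrK.
Qed.

Lemma aff_hyper (R : realType) d (A : rset R d) (c : 'rV[R]_d) c0 x :
  (forall y, A y -> dotv c y = c0) -> aff_hull A x -> dotv c x = c0.
Proof.
move=> HA /affE [n [p [lam [Hp [H1 ->]]]]].
rewrite dotv_sumr (@eq_big_nat _ _ _ _ _ _ (fun i => lam i * c0)).
  by rewrite -mulr_suml H1 mul1r.
by move=> i /andP[_ Hi]; rewrite dotvZr HA //; exact: Hp.
Qed.

Lemma aff_swp (R : realType) d (k : 'I_d) (G : rset R d) x :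
  aff_hull (swpk k G) x -> exists z c, aff_hull G z /\ x = z - c *: unitv R k.
Proof.
move=> /affE [n [p [lam [Hp [H1 H2]]]]].
have H : forall i, exists pt : 'rV[R]_d * R, (i < n)%N ->
    G pt.1 /\ p i = pt.1 - (pt.2 * pt.1 0 k) *: unitv R k.
  move=> i; case: (ltnP i n) => Hi.
    have [q [t [Gq [_ ->]]]] := Hp i Hi; by exists (q, t).
  by exists (0, 0).
pose f i := proj1_sig (constructive_indefinite_description _ (H i)).
have Hf i : (i < n)%N -> G (f i).1 /\ p i = (f i).1 - ((f i).2 * (f i).1 0 k) *: unitv R k.
  exact: (proj2_sig (constructive_indefinite_description _ (H i))).
exists (\sum_(0 <= i < n) lam i *: (f i).1),
  (\sum_(0 <= i < n) lam i * ((f i).2 * (f i).1 0 k)); split.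
  apply/affE; exists n, (fun i => (f i).1), lam; split=> //.
  by move=> i /Hf [].
rewrite H2 scaler_suml -sumrB; apply: eq_big_nat => i /andP[_ Hi].
by rewrite (proj2 (Hf i Hi)) scalerBr scalerA.
Qed.

Lemma rset_ext (R : realType) d (A B : rset R d) : (forall x, A x <-> B x) -> A = B.
Proof.
move=> H; apply: functional_extensionality => x.
by apply: propositional_extensionality.
Qed.

Lemma conv_mem (R : realType) d (S : seq 'rV[R]_d) j : (j < size S)%N -> conv_hull S S`_j.
Proof.
move=> Hj; exists (fun i => (i == Ordinal Hj)%:R); split; first by move=> i; rewrite ler0n.
split.
  by rewrite (bigD1 (Ordinal Hj)) //= eqxx big1 ?addr0 // => i /negbTE ->.
rewrite (bigD1 (Ordinal Hj)) //= eqxx scale1r big1 ?addr0 // => i /negbTE ->.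
by rewrite scale0r.
Qed.

Definition prk (R : realType) d (k : 'I_d) (x : 'rV[R]_d) := x - x 0 k *: unitv R k.

Lemma swp_conv (R : realType) d (k : 'I_d) (S : seq 'rV[R]_d) :
  (forall x, conv_hull S x -> 0 < x 0 k) ->
  swpk k (conv_hull S) = conv_hull (S ++ map (@prk R d k) S).
Proof.
move=> Hpos; apply: rset_ext => y; split.
- case=> p [t [/convE [lam [H0 [H1 H2]]] [/andP [t0 t1] ->]]].
  apply/convE; rewrite size_cat size_map.
  exists (catf (size S) (fun i => (1 - t) * lam i) (fun i => t * lam i)); split; [|split].
  + move=> i Hi; rewrite /catf; case: ltnP => Hin.
      by apply: mulr_ge0; [rewrite subr_ge0 | exact: H0].
    by apply: mulr_ge0 => //; apply: H0; rewrite ltn_subLR.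
  + rewrite sum_split; under [X in _ + X = _]eq_bigr => i _ do rewrite catf_add.
    rewrite (@eq_big_nat _ _ _ _ _ _ (fun i => (1 - t) * lam i)); last first.
      by move=> i /andP[_ Hi]; rewrite catf_lt.
    by rewrite -!mulr_sumr H1 !mulr1 subrK.
  + rewrite sum_split; under [X in _ = _ + X]eq_bigr => i _ do
      rewrite catf_add nth_cat ltnNge leq_addl /= addnK.
    rewrite (@eq_big_nat _ _ _ _ _ _ (fun i => ((1 - t) * lam i) *: S`_i)); last first.
      by move=> i /andP[_ Hi]; rewrite catf_lt // nth_cat Hi.
    rewrite (@eq_big_nat _ _ _ _ _ (fun i => (t * lam i) *: (map (@prk R d k) S)`_i)
      (fun i => (t * lam i) *: prk k S`_i)); last first.
      by move=> i /andP[_ Hi]; rewrite (nth_map 0).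
    rewrite H2; apply/rowP => j; rewrite !mxE !summxE -big_split /= mulrAC mulr_sumr -sumrB.
    apply: eq_bigr => i _; rewrite !mxE; ring.
- move=> /convE [lam [H0 [H1 H2]]]; move: H0 H1 H2; rewrite size_cat size_map => H0 H1 H2.
  set m := size S in H0 H1 H2.
  pose p := \sum_(0 <= i < m) (lam i + lam (i + m)%N) *: S`_i.
  have Pp : conv_hull S p.
    apply/convE; exists (fun i => lam i + lam (i + m)%N); split; [|split] => //.
    + by move=> i Hi; apply: addr_ge0; apply: H0; rewrite ?ltn_add2r // ltn_addr.
    + by rewrite big_split /= -sum_split.
  have pk := Hpos _ Pp.
  have Sk i : (i < m)%N -> 0 <= S`_i 0 k by move=> Hi; apply: ltW; apply: Hpos; exact: conv_mem.
  pose c := \sum_(0 <= i < m) lam (i + m)%N * S`_i 0 k.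
  have c0 : 0 <= c.
    rewrite /c big_nat sumr_ge0 // => i /andP[_ Hi]; apply: mulr_ge0; last exact: Sk.
    by apply: H0; rewrite ltn_add2r.
  have cp : c <= p 0 k.
    rewrite /p coord_sum /c -subr_ge0 -sumrB big_nat sumr_ge0 // => i /andP[_ Hi].
    rewrite !mxE mulrDl addrK; apply: mulr_ge0; last exact: Sk.
    by apply: H0; rewrite ltn_addr.
  exists p, (c / p 0 k); split => //; split.
    apply/andP; split; first by apply: divr_ge0 => //; exact: ltW.
    by rewrite ler_pdivrMr // mul1r.
  rewrite mulrAC -mulrA mulfV ?mulr1 ?gt_eqF //.
  rewrite H2 sum_split.
  rewrite (@eq_big_nat _ _ _ _ _ (fun i => lam (i + m)%N *: (S ++ map (@prk R d k) S)`_(i + m))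
      (fun i => lam (i + m)%N *: prk k S`_i)); last first.
    by move=> i /andP[_ Hi]; rewrite nth_cat ltnNge leq_addl /= addnK (nth_map 0).
  rewrite (@eq_big_nat _ _ _ _ _ (fun i => lam i *: (S ++ map (@prk R d k) S)`_i)
      (fun i => lam i *: S`_i)); last first.
    by move=> i /andP[_ Hi]; rewrite nth_cat Hi.
  apply/rowP => j; rewrite /p /c !mxE !summxE mulr_suml -!sumrB -big_split /=.
  apply: eq_bigr => i _; rewrite !mxE; ring.
Qed.

Lemma subB_mx (F : fieldType) m1 m2 n (A B : 'M[F]_(m1, n)) (C : 'M[F]_(m2, n)) :
  (A <= C)%MS -> (B <= C)%MS -> (A - B <= C)%MS.
Proof. move=> HA HB; apply: addmx_sub => //; rewrite -scaleN1r; exact: scalemx_sub. Qed.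

Lemma aff_nonempty (R : realType) d (A : rset R d) x : aff_hull A x -> exists y, A y.
Proof.
move=> /affE [n [p [lam [Hp [H1 _]]]]]; case: n Hp H1 => [|n] Hp H1.
  by move: H1; rewrite big_geq // => /eqP; rewrite eq_sym oner_eq0.
by exists (p 0%N); apply: Hp.
Qed.

Lemma sub_swp (R : realType) d (k : 'I_d) (P : rset R d) x : P x -> swpk k P x.
Proof. by move=> Px; exists x, 0; rewrite lexx ler01 mul0r scale0r subr0. Qed.

Lemma prk_swp (R : realType) d (k : 'I_d) (P : rset R d) x : P x -> swpk k P (prk k x).
Proof. by move=> Px; exists x, 1; rewrite lexx ler01 mul1r. Qed.

Lemma aff_base (R : realType) d (A : rset R d) x0 (V : 'M[R]_d) :
  (forall x, aff_hull A x <-> (x - x0 <= V)%MS) -> aff_hull A x0.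
Proof. by move=> H; apply/H; rewrite subrr sub0mx. Qed.

Lemma dim_up (R : realType) d (k : 'I_d) (P : rset R d) n (pi : 'rV[R]_d) pi0 :
  affdim P n -> (forall x, P x -> dotv pi x = pi0) -> pi 0 k != 0 ->
  (forall x, P x -> 0 < x 0 k) -> affdim (swpk k P) n.+1.
Proof.
move=> [x0 [V [HV Haff]]] Hpi pik Hpos.
set e := unitv R k.
have eV : ~~ (e <= V)%MS.
  apply/negP => He.
  have A0 := aff_base Haff.
  have A1 : aff_hull P (x0 + e) by apply/Haff; rewrite addrC addKr.
  have := aff_hyper Hpi A1; rewrite dotvDr (aff_hyper Hpi A0) dotv_unit => /eqP.
  by rewrite -subr_eq0 addrC addKr (negbTE pik).
exists x0, (V + e)%MS; split.
  have Hc : \rank (V :&: e)%MS = 0%N.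
    have := mxrankS (capmxSr V e); rewrite rank_rV unitv_neq0 /= => Hle.
    case Hr: (\rank (V :&: e)%MS) Hle => [//|r] Hle.
    have r0 : r = 0%N by lia.
    have [_ Heq] := mxrank_leqif_eq (capmxSr V e).
    rewrite Hr rank_rV unitv_neq0 r0 eqxx in Heq.
    move: Heq => /esym /andP [_ He]; exfalso.
    by move: eV; rewrite (submx_trans He (capmxSl V e)).
  have := mxrank_sum_cap V e; rewrite Hc rank_rV unitv_neq0 HV addn0 addn1 => ->.
  done.
move=> x; split.
- move=> /aff_swp [z [c [Hz ->]]].
  have -> : z - c *: e - x0 = (z - x0) + (- c) *: e by rewrite scaleNr addrAC.
  apply: addmx_sub_adds; first exact/Haff.
  exact: scalemx_sub.
- move=> /sub_addsmxP [[u1 u2] /= Hx].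
  have [p Pp] := aff_nonempty (aff_base Haff).
  have pk : p 0 k != 0 by apply: lt0r_neq0; apply: Hpos.
  set t := u2 0 0.
  have -> : x = (x0 + u1 *m V) + (t / p 0 k) *: (p - prk k p).
    rewrite [u2]mx11_scalar mul_scalar_mx in Hx.
    rewrite -[x](subrK x0) Hx; apply/rowP => j; rewrite !mxE /t; field.
    exact: pk.
  apply: aff_comb3.
  + apply: (aff_mono (@sub_swp R d k P)); apply/Haff.
    by rewrite addrC addKr; exact: submxMl.
  + by apply: aff_sub; apply: sub_swp.
  + by apply: aff_sub; apply: prk_swp.
Qed.

Lemma sub_ker_dot (R : realType) d (pi u : 'rV[R]_d) :
  (u <= kermx pi^T)%MS = (dotv pi u == 0).
Proof.
rewrite sub_kermx.
have E : (u *m pi^T) 0 0 = dotv pi u.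
  by rewrite !mxE /dotv; apply: eq_bigr => j _; rewrite mxE mulrC.
apply/eqP/eqP => [H|H]; first by rewrite -E H mxE.
by apply/matrixP => i j; rewrite !ord1 E H mxE.
Qed.

Lemma dim_down (R : realType) d (k : 'I_d) (G : rset R d) l (pi : 'rV[R]_d) pi0 :
  (exists x, G x) -> (forall x, G x -> dotv pi x = pi0) -> pi 0 k != 0 ->
  (forall x, G x -> 0 < x 0 k) -> affdim (swpk k G) l -> (0 < l)%N /\ affdim G l.-1.
Proof.
move=> [x1 Gx1] Hpi pik Hpos [x0 [V [HV Haff]]].
set e := unitv R k.
have d0 : (0 < d)%N by apply: leq_ltn_trans (ltn_ord k).
have x1k : x1 0 k != 0 by apply: lt0r_neq0; apply: Hpos.
have eV : (e <= V)%MS.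
  have A1 : (x1 - x0 <= V)%MS by apply/Haff; apply: aff_sub; apply: sub_swp.
  have A2 : (prk k x1 - x0 <= V)%MS by apply/Haff; apply: aff_sub; apply: prk_swp.
  have := subB_mx A1 A2.
  have -> : x1 - x0 - (prk k x1 - x0) = x1 0 k *: e.
    by apply/rowP => j; rewrite /prk !mxE; ring.
  move=> /(scalemx_sub (x1 0 k)^-1); rewrite scalerA mulVf // scale1r.
  done.
have l0 : (0 < l)%N.
  by rewrite -HV; have := mxrankS eV; rewrite rank_rV unitv_neq0.
split => //.
set K := kermx pi^T.
have eK : ~~ (e <= K)%MS by rewrite sub_ker_dot dotv_unit.
have pi_n0 : pi != 0 by apply/negP => /eqP H; move: pik; rewrite H mxE eqxx.
have rK : \rank K = d.-1 by rewrite mxrank_ker mxrank_tr rank_rV pi_n0 subn1.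
have rVK : \rank (V + K)%MS = d.
  apply/eqP; rewrite eqn_leq rank_leq_col /=.
  have := ltn_leqif (mxrank_leqif_sup (addsmxSr V K)).
  have -> : (V + K <= K)%MS = false.
    apply/negP => H; move: eK; by rewrite (submx_trans eV (submx_trans (addsmxSl V K) H)).
  rewrite rK /= => H; lia.
exists x1, (V :&: K)%MS; split.
  have := mxrank_sum_cap V K; rewrite rVK rK HV; lia.
have Hx1 : (x1 - x0 <= V)%MS by apply/Haff; apply: aff_sub; apply: sub_swp.
move=> x; split.
- move=> Hx; rewrite sub_capmx; apply/andP; split.
    have Hx' : (x - x0 <= V)%MS by apply/Haff; apply: (aff_mono (@sub_swp R d k G)).
    have := subB_mx Hx' Hx1; by rewrite opprB addrA subrK.
  by rewrite sub_ker_dot dotvBr (aff_hyper Hpi Hx) (Hpi _ Gx1) subrr.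
- rewrite sub_capmx => /andP [HxV HxK].
  have : (x - x0 <= V)%MS.
    have := addmx_sub HxV Hx1; by rewrite addrA subrK.
  move=> /Haff /aff_swp [z [c [Hz Exz]]].
  have pix : dotv pi x = pi0.
    by move: HxK; rewrite sub_ker_dot dotvBr (Hpi _ Gx1) subr_eq0 => /eqP.
  move: pix; rewrite Exz dotvBr dotvZr (aff_hyper Hpi Hz) dotv_unit => /eqP.
  rewrite subr_eq addrC -subr_eq subrr eq_sym mulf_eq0 (negbTE pik) orbF => /eqP c0.
  by rewrite c0 scale0r subr0.
Qed.

Lemma dot_swp (R : realType) d (k : 'I_d) (a p : 'rV[R]_d) t :
  dotv a (p - (t * p 0 k) *: unitv R k) = dotv a p - t * p 0 k * a 0 k.
Proof. by rewrite dotvBr dotvZr dotv_unit. Qed.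

Lemma face_P_swp (R : realType) d (k : 'I_d) (P : rset R d) (pi : 'rV[R]_d) pi0 a b :
  (forall x, P x -> dotv pi x = pi0) -> pi 0 k != 0 -> (forall x, P x -> 0 < x 0 k) ->
  (forall x, P x -> dotv a x <= b) -> (exists x, P x /\ dotv a x = b) ->
  is_face (swpk k P) (fun x => P x /\ dotv a x = b).
Proof.
move=> Hpi pik Hpos Hab [x0 [Px0 ax0]]; right.
set c := (`|a 0 k| + 1) / pi 0 k.
have s0 : 0 < (a + c *: pi) 0 k.
  rewrite !mxE /c mulrAC -mulrA mulfV // mulr1.
  have := ler_norm (- a 0 k); rewrite normrN; lra.
have Ed : forall (p : 'rV[R]_d) (t : R), P p -> dotv (a + c *: pi) (p - (t * p 0 k) *: unitv R k)
    = dotv a p + c * pi0 - t * p 0 k * (a + c *: pi) 0 k.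
  by move=> p t Pp; rewrite dot_swp dotvDl dotvZl Hpi.
exists (a + c *: pi), (b + c * pi0); split; [|split; [|split]].
- by apply/negP => /eqP H; move: s0; rewrite H mxE ltxx.
- move=> y [p [t [Pp [/andP [t0 t1] ->]]]]; rewrite Ed //.
  have := Hab _ Pp; have := Hpos _ Pp => pk.
  have : 0 <= t * p 0 k * (a + c *: pi) 0 k.
    by apply: mulr_ge0 => //; [apply: mulr_ge0 => //; exact: ltW | exact: ltW].
  lra.
- exists x0; split; first exact: sub_swp.
  by rewrite dotvDl dotvZl ax0 Hpi.
- apply: rset_ext => y; split.
  + move=> [Py ay]; split; first exact: sub_swp.
    by rewrite dotvDl dotvZl ay Hpi.
  + move=> [[p [t [Pp [/andP [t0 t1] Ey]]]]]; rewrite Ey Ed // => Hb.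
    have := Hab _ Pp; have pk := Hpos _ Pp => Hap.
    have h1 : 0 <= t * p 0 k * (a + c *: pi) 0 k.
      by apply: mulr_ge0 => //; [apply: mulr_ge0 => //; exact: ltW | exact: ltW].
    have h2 : t * p 0 k * (a + c *: pi) 0 k = 0 by lra.
    have t00 : t = 0.
      by move/eqP: h2; rewrite !mulf_eq0 (gt_eqF pk) (gt_eqF s0) !orbF => /eqP.
    move: Hb; rewrite t00 !mul0r subr0 => Hb.
    by move: Hb; rewrite scale0r subr0; split => //; lra.
Qed.

Lemma dotv_unitl (R : realType) d (a : 'rV[R]_d) (k : 'I_d) : dotv (unitv R k) a = a 0 k.
Proof.
rewrite /dotv (bigD1 k) //= unitvE eqxx mul1r big1 ?addr0 // => i /negbTE Hi.
by rewrite unitvE Hi mul0r.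
Qed.

Lemma dotv0l (R : realType) d (x : 'rV[R]_d) : dotv 0 x = 0.
Proof. by rewrite -(scale0r (0 : 'rV[R]_d)) dotvZl mul0r. Qed.

Lemma face_proj_swp (R : realType) d (k : 'I_d) (P : rset R d) a b :
  (forall x, P x -> 0 < x 0 k) ->
  (forall y, projk k P y -> dotv a y <= b) -> (exists y, projk k P y /\ dotv a y = b) ->
  is_face (swpk k P) (fun y => projk k P y /\ dotv a y = b).
Proof.
move=> Hpos Hab [y0 [Py0 ay0]]; right.
set a' := a - (a 0 k + 1) *: unitv R k.
have a'k : a' 0 k = -1 by rewrite !mxE !eqxx /= mulr1; ring.
have Ed : forall (p : 'rV[R]_d) (t : R), dotv a' (p - (t * p 0 k) *: unitv R k)
    = dotv a p - p 0 k * a 0 k - p 0 k + t * p 0 k.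
  by move=> p t; rewrite dot_swp a'k /a' dotvBl dotvZl dotv_unitl; ring.
have Hprk : forall p : 'rV[R]_d, P p -> projk k P (prk k p) by move=> p Pp; exists p.
have Eprk : forall p : 'rV[R]_d, dotv a (p - p 0 k *: unitv R k) = dotv a p - p 0 k * a 0 k.
  by move=> p; rewrite dotvBr dotvZr dotv_unit.
have Eq1 : forall p : 'rV[R]_d, p - p 0 k *: unitv R k = p - (1 * p 0 k) *: unitv R k by move=> p; rewrite mul1r.
exists a', b; split; [|split; [|split]].
- by apply/negP => /eqP H; move: a'k; rewrite H mxE => /eqP; rewrite eq_sym oppr_eq0 oner_eq0.
- move=> y [p [t [Pp [/andP [t0 t1] ->]]]]; rewrite Ed.
  have := Hab _ (Hprk _ Pp); rewrite Eprk.
  have pk := Hpos _ Pp.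
  have : t * p 0 k <= p 0 k by nra.
  lra.
- exists y0; case: Py0 ay0 => p [Pp ->] ay0; split; first exact: prk_swp.
  by rewrite Eq1 Ed; move: ay0; rewrite Eprk; lra.
- apply: rset_ext => y; split.
  + move=> [[p [Pp ->]] ay]; split; first exact: prk_swp.
    by rewrite Eq1 Ed; move: ay; rewrite Eprk; lra.
  + move=> [[p [t [Pp [/andP [t0 t1] ->]]]]]; rewrite Ed => Hb.
    have := Hab _ (Hprk _ Pp); rewrite Eprk => Hap.
    have pk := Hpos _ Pp.
    have h : (1 - t) * p 0 k <= 0 by lra.
    have t1' : t = 1.
      apply/eqP; rewrite eq_le t1 /=; move: h; rewrite pmulr_lle0 // subr_le0.
      done.
    split; first by rewrite t1' -Eq1; exact: Hprk.
    by rewrite t1' -Eq1 Eprk; move: Hb; rewrite t1'; lra.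
Qed.

Lemma face_swpG (R : realType) d (k : 'I_d) (P : rset R d) (pi : 'rV[R]_d) pi0 a b :
  (forall x, P x -> dotv pi x = pi0) -> pi 0 k != 0 ->
  (forall x, P x -> dotv a x <= b) -> (exists x, P x /\ dotv a x = b) ->
  is_face (swpk k P) (swpk k (fun x => P x /\ dotv a x = b)).
Proof.
move=> Hpi pik Hab [x0 [Px0 ax0]].
set r := a 0 k / pi 0 k.
set a' := a - r *: pi.
have Ea : forall p : 'rV[R]_d, P p -> dotv a' p = dotv a p - r * pi0.
  by move=> p Pp; rewrite /a' dotvBl dotvZl Hpi.
have a'k : a' 0 k = 0 by rewrite !mxE /r mulfVK // subrr.
have Ed : forall (p : 'rV[R]_d) (t : R), dotv a' (p - (t * p 0 k) *: unitv R k) = dotv a' p.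
  by move=> p t; rewrite dot_swp a'k mulr0 subr0.
have [a0|a0] := eqVneq a' 0.
- left; congr swpk; apply: rset_ext => x; split; first by case.
  move=> Px; split => //.
  have := Ea _ Px; have := Ea _ Px0; rewrite a0 !dotv0l.
  lra.
right; exists a', (b - r * pi0); split; [done|split; [|split]].
- move=> y [p [t [Pp [_ ->]]]]; rewrite Ed Ea //; have := Hab _ Pp; lra.
- by exists x0; split; [exact: sub_swp | rewrite Ea // ax0].
- apply: rset_ext => y; split.
  + move=> [p [t [[Pp ap] [Ht ->]]]]; split; first by exists p, t.
    by rewrite Ed Ea // ap.
  + move=> [[p [t [Pp [Ht ->]]]]]; rewrite Ed Ea // => Hb.
    exists p, t; split => //; split => //; lra.
Qed.

Lemma key_P (R : realType) d (k : 'I_d) (P : rset R d) (a y : 'rV[R]_d) (b : R) :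
  (forall x, P x -> 0 < x 0 k) -> 0 < a 0 k ->
  (forall x, swpk k P x -> dotv a x <= b) -> swpk k P y -> dotv a y = b -> P y.
Proof.
move=> Hpos ak Hab [p [t [Pp [/andP [t0 t1] Ey]]]]; rewrite Ey dot_swp => Hb.
have := Hab _ (sub_swp k Pp) => Hap.
have pk := Hpos _ Pp.
have h : t * p 0 k * a 0 k = 0.
  apply/eqP; rewrite eq_le; apply/andP; split; first lra.
  by apply: mulr_ge0 => //; [apply: mulr_ge0 => //; exact: ltW | exact: ltW].
have t0' : t = 0.
  by move/eqP: h; rewrite !mulf_eq0 (gt_eqF pk) (gt_eqF ak) !orbF => /eqP.
by rewrite t0' mul0r scale0r subr0.
Qed.

Lemma key_proj (R : realType) d (k : 'I_d) (P : rset R d) (a y : 'rV[R]_d) (b : R) :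
  (forall x, P x -> 0 < x 0 k) -> a 0 k < 0 ->
  (forall x, swpk k P x -> dotv a x <= b) -> swpk k P y -> dotv a y = b -> projk k P y.
Proof.
move=> Hpos ak Hab [p [t [Pp [/andP [t0 t1] Ey]]]]; rewrite Ey dot_swp => Hb.
have := Hab _ (prk_swp k Pp).
have -> : prk k p = p - (1 * p 0 k) *: unitv R k by rewrite mul1r.
rewrite dot_swp => Hap.
have pk := Hpos _ Pp.
have h : (1 - t) * (p 0 k * - a 0 k) <= 0 by lra.
have t1' : t = 1.
  apply/eqP; rewrite eq_le t1 /=; move: h; rewrite pmulr_lle0 ?subr_le0 //.
  by apply: mulr_gt0 => //; rewrite oppr_gt0.
by exists p; split => //; rewrite t1' mul1r.
Qed.

Lemma proj_sub_swp (R : realType) d (k : 'I_d) (P : rset R d) y : projk k P y -> swpk k P y.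
Proof. by case=> p [Pp ->]; exact: prk_swp. Qed.

Unset Implicit Arguments. Set Strict Implicit. Set Printing Implicit Defensive.

Theorem proposition5 (R : realType) (d : nat) (k : 'I_d) (P : rset R d)
    (n : nat) (pi : 'rV[R]_d) (pi0 : R) :
  (1 <= d)%N ->
  is_polytope P -> affdim P n -> (n <= d.-1)%N ->
  (forall x, P x -> 0 < x 0 k) ->
  (forall x, P x -> dotv pi x = pi0) -> pi 0 k != 0 ->
  (* (i) *)
  (is_polytope (swpk k P) /\ affdim (swpk k P) n.+1) /\
  (* (ii) *)
  (forall (l : nat) (F : rset R d), is_lface (swpk k P) l F ->
     is_lface P l F \/ is_lface (projk k P) l F \/
     exists G : rset R d, (0 < l)%N /\ is_lface P l.-1 G /\ F = swpk k G) /\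
  (* (iii) *)
  ((forall F, is_face P F -> is_face (swpk k P) F) /\
   (forall F, is_face (projk k P) F -> is_face (swpk k P) F) /\
   (forall G, is_face P G -> is_face (swpk k P) (swpk k G))).
Proof.
move=> d1 [S HS] Hdim Hn Hpos Hpi pik.
have [p0 Pp0] : exists x, P x.
  by case: Hdim => x0 [V [_ Haff]]; apply: aff_nonempty (aff_base Haff).
split; [split|split].
- exists (S ++ map (@prk R d k) S); rewrite HS; apply: swp_conv; by rewrite -HS.
- exact: dim_up Hdim Hpi pik Hpos.
- move=> l F [[HF|[a [b [an0 [Hab [[y0 [Sy0 ay0]] HF]]]]]] HdF].
  + right; right; exists P; rewrite HF in HdF.
    have [l0 HP] := dim_down (ex_intro _ p0 Pp0) Hpi pik Hpos HdF.
    by split => //; split => //; split => //; left.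
  + case: (ltgtP (a 0 k) 0) => ak.
    * right; left.
      have Fe : F = (fun y => projk k P y /\ dotv a y = b).
        rewrite HF; apply: rset_ext => y; split.
          by case=> Sy ay; split => //; exact: key_proj ak Hab Sy ay.
        by case=> Py ay; split => //; exact: proj_sub_swp.
      rewrite Fe in HdF *; split => //; right; exists a, b; split => //; split.
        by move=> y /proj_sub_swp; exact: Hab.
      split => //; exists y0; split => //; exact: key_proj ak Hab Sy0 ay0.
    * left.
      have Fe : F = (fun y => P y /\ dotv a y = b).
        rewrite HF; apply: rset_ext => y; split.
          by case=> Sy ay; split => //; exact: key_P ak Hab Sy ay.
        by case=> Py ay; split => //; exact: sub_swp.
      rewrite Fe in HdF *; split => //; right; exists a, b; split => //; split.
        by move=> y /(sub_swp k); exact: Hab.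
      split => //; exists y0; split => //; exact: key_P ak Hab Sy0 ay0.
    * right; right; exists (fun x => P x /\ dotv a x = b).
      have Fe : F = swpk k (fun x => P x /\ dotv a x = b).
        rewrite HF; apply: rset_ext => y; split.
          case=> [[p [t [Pp [Ht Ey]]]] ay]; exists p, t; split => //.
          by split => //; move: ay; rewrite Ey dot_swp ak mulr0 subr0.
        case=> p [t [[Pp ap] [Ht Ey]]]; split; first by exists p, t.
        by rewrite Ey dot_swp ak mulr0 subr0.
      have [q [Pq aq]] : exists q, P q /\ dotv a q = b.
        case: Sy0 ay0 => p [t [Pp [Ht ->]]]; rewrite dot_swp ak mulr0 subr0 => ap.
        by exists p.
      rewrite Fe in HdF *.
      have [l0 HG] := dim_down (ex_intro _ q (conj Pq aq)) (fun x Hx => Hpi x (proj1 Hx))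
        pik (fun x Hx => Hpos x (proj1 Hx)) HdF.
      split => //; split => //; split => //; right; exists a, b; split => //; split.
        by move=> x /(sub_swp k); exact: Hab.
      by split => //; exists q.
- split; [|split].
  + move=> F [->|[a [b [an0 [Hab [Hx ->]]]]]]; last exact: face_P_swp Hpi pik Hpos Hab Hx.
    have := @face_P_swp R d k P pi pi0 0 0 Hpi pik Hpos.
    have -> : (fun x => P x /\ dotv 0 x = 0) = P.
      by apply: rset_ext => x /=; rewrite dotv0l; split => [[]|].
    apply.
      by move=> x _; rewrite dotv0l.
    by exists p0.
  + move=> F [->|[a [b [an0 [Hab [Hx ->]]]]]]; last exact: face_proj_swp Hpos Hab Hx.
    have := @face_proj_swp R d k P 0 0 Hpos.
    have -> : (fun x => projk k P x /\ dotv 0 x = 0) = projk k P.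
      by apply: rset_ext => x /=; rewrite dotv0l; split => [[]|].
    apply.
      by move=> x _; rewrite dotv0l.
    by exists (prk k p0); exists p0.
  + move=> G [->|[a [b [an0 [Hab [Hx ->]]]]]]; first by left.
    exact: face_swpG Hpi pik Hab Hx.
Qed.
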